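(* For a compact (Hausdorff) space $K$ the following are equivalent: (1) $K$ is almost totally disconnected; (2) there is a family $\{(F_i,H_i)\}_{i\in I}$ of pairs of closed subsets of $K$ such that (a) $F_i\cap H_i=\emptyset$ for all $i\in I$; (b) for every $x\in K$ the set $\{i\in I: x\notin F_i\cup H_i\}$ is countable; (c) for any two distinct points $x,y\in K$ there is $i\in I$ with either $x\in F_i$ and $y\in H_i$, or $y\in F_i$ and $x\in H_i$.
   Context: For a set $\Gamma$, $\Sigma_0^1[0,1]^\Gamma$ is the subspace of $[0,1]^\Gamma$ (product topology) consisting of those $x$ with $x_\gamma\in\{0,1\}$ for all but countably many $\gamma$. A compact space is almost totally disconnected if it is homeomorphic to a subspace of $\Sigma_0^1[0,1]^\Gamma$ for some set $\Gamma$. *)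

(* Defs.v *)
From Stdlib Require Import Reals List.
Open Scope R_scope.

Record TopSpace := {
  carrier :> Type;
  is_open : (carrier -> Prop) -> Prop;
  open_full : is_open (fun _ => True);
  open_inter : forall U V, is_open U -> is_open V ->
      is_open (fun x => U x /\ V x);
  open_union : forall (Fam : (carrier -> Prop) -> Prop),
      (forall U, Fam U -> is_open U) ->
      is_open (fun x => exists U, Fam U /\ U x)
}.

Arguments is_open {t} _.

Definition is_closed {X : TopSpace} (C : X -> Prop) : Prop :=
  is_open (fun x => ~ C x).

Definition top_compact (X : TopSpace) : Prop :=
  forall Fam : (X -> Prop) -> Prop,
    (forall U, Fam U -> is_open U) ->
    (forall x : X, exists U, Fam U /\ U x) ->
    exists l : list (X -> Prop),
      (forall U, In U l -> Fam U) /\ (forall x : X, exists U, In U l /\ U x).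

Definition top_hausdorff (X : TopSpace) : Prop :=
  forall x y : X, x <> y ->
    exists U V : X -> Prop, is_open U /\ is_open V /\ U x /\ V y /\
      (forall z, ~ (U z /\ V z)).

Definition countable_set {T : Type} (A : T -> Prop) : Prop :=
  exists f : T -> nat, forall a b, A a -> A b -> f a = f b -> a = b.

(* Product topology on R^Gamma (standard topology of R on each factor):
   U is open iff every point of U has a basic neighbourhood inside U,
   a basic neighbourhood being given by finitely many coordinates and a
   radius. *)
Definition prod_open (Gamma : Type) (U : (Gamma -> R) -> Prop) : Prop :=
  forall x, U x -> exists (gs : list Gamma) (eps : R), 0 < eps /\
    forall y, (forall g, In g gs -> Rabs (y g - x g) < eps) -> U y.

Definition Sigma01 (Gamma : Type) (x : Gamma -> R) : Prop :=
  (forall g, 0 <= x g <= 1) /\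
  countable_set (fun g => x g <> 0 /\ x g <> 1).

(* e : K -> R^Gamma is a homeomorphism of K onto its image, the image
   carrying the subspace topology of the product topology of R^Gamma
   (equivalently of [0,1]^Gamma or of Sigma_0^1[0,1]^Gamma, since subspace
   topologies are transitive). *)
Definition embedding (K : TopSpace) (Gamma : Type) (e : K -> (Gamma -> R))
  : Prop :=
  (forall a b, e a = e b -> a = b) /\
  (forall V, prod_open Gamma V -> is_open (fun k => V (e k))) /\
  (forall U : K -> Prop, is_open U ->
     exists V, prod_open Gamma V /\ forall k, U k <-> V (e k)).

Definition almost_totally_disconnected (K : TopSpace) : Prop :=
  exists (Gamma : Type) (e : K -> (Gamma -> R)),
    (forall k, Sigma01 Gamma (e k)) /\ embedding K Gamma e.

(* Main.v *)
Require Import Defs.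
From Stdlib Require Import Reals List.
From Stdlib Require Import Lra Lia ZArith Classical ClassicalEpsilon FunctionalExtensionality PropExtensionality.
From Stdlib Require Cantor.
Open Scope R_scope.


Lemma open_ext {K : TopSpace} (U W : K -> Prop) :
  (forall z, U z <-> W z) -> is_open U -> is_open W.
Proof.
  intros h hU. replace W with U; auto.
  apply functional_extensionality; intros z; apply propositional_extensionality; auto.
Qed.

Lemma closed_ext {K : TopSpace} (U W : K -> Prop) :
  (forall z, U z <-> W z) -> is_closed U -> is_closed W.
Proof.
  intros h hU. unfold is_closed in *. eapply open_ext; [|exact hU].
  intro z; specialize (h z); tauto.
Qed.

Lemma open_empty {K : TopSpace} : is_open (fun _ : K => False).
Proof.
  eapply open_ext; [|apply (open_union K (fun _ => False))]; [|tauto].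
  intro z; split; [firstorder|tauto].
Qed.

Lemma open_and {K : TopSpace} (U V : K -> Prop) : is_open U -> is_open V -> is_open (fun x => U x /\ V x).
Proof. apply open_inter. Qed.

Lemma closed_compl_open {K : TopSpace} (U : K -> Prop) : is_open U -> is_closed (fun x => ~ U x).
Proof. intro h. unfold is_closed. eapply open_ext; [|exact h]. intro z; tauto. Qed.

Definition disj {K : Type} (U V : K -> Prop) := forall z, ~ (U z /\ V z).

Definition goodW {K : TopSpace} (Pv : (K -> Prop) -> Prop) (W : K -> Prop) :=
  is_open W /\ exists V, is_open V /\ Pv V /\ disj W V.

Lemma gen_list {K : TopSpace} (Pv : (K -> Prop) -> Prop)
  (Pfull : Pv (fun _ => True))
  (Pint : forall V1 V2, Pv V1 -> Pv V2 -> Pv (fun z => V1 z /\ V2 z)) :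
  forall l : list (K -> Prop), exists V, is_open V /\ Pv V /\
    forall W, In W l -> goodW Pv W -> disj W V.
Proof.
  induction l as [|W l IH].
  - exists (fun _ => True). split; [apply open_full|]. split; auto. intros W [].
  - destruct IH as [V0 [hV0 [pV0 dV0]]].
    destruct (classic (goodW Pv W)) as [g|ng].
    + destruct g as [hW [V1 [hV1 [pV1 dV1]]]].
      exists (fun z => V0 z /\ V1 z). split; [apply open_inter; auto|]. split; [auto|].
      intros W' [e|i] gW' z [a [b c]].
      * subst W'. apply (dV1 z); auto.
      * apply (dV0 W' i gW' z); auto.
    + exists V0. split; auto. split; auto. intros W' [e|i] gW'.
      * subst; contradiction.
      * auto.
Qed.

Lemma gen_sep (K : TopSpace) (hK : top_compact K) (A : K -> Prop) (hA : is_closed A)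
  (Pv : (K -> Prop) -> Prop)
  (Pfull : Pv (fun _ => True))
  (Pint : forall V1 V2, Pv V1 -> Pv V2 -> Pv (fun z => V1 z /\ V2 z))
  (loc : forall x, A x -> exists W V, is_open W /\ is_open V /\ W x /\ Pv V /\ disj W V) :
  exists U V, is_open U /\ is_open V /\ (forall z, A z -> U z) /\ Pv V /\ disj U V.
Proof.
  destruct (hK (fun W => goodW Pv W \/ W = (fun x => ~ A x))) as [l [hl cov]].
  - intros U [g|e]; [apply g|]. subst; exact hA.
  - intro x. destruct (classic (A x)) as [a|na].
    + destruct (loc x a) as [W [V [hW [hV [Wx [pV d]]]]]].
      exists W; split; auto. left; split; auto. exists V; auto.
    + exists (fun x => ~ A x); auto.
  - destruct (gen_list Pv Pfull Pint l) as [V [hV [pV dV]]].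
    exists (fun z => exists W, (In W l /\ goodW Pv W) /\ W z), V.
    split; [apply open_union; intros U [_ [g _]]; exact g|].
    split; auto. split; [|split; auto].
    + intros z az. destruct (cov z) as [W [i Wz]]. exists W. split; auto. split; auto.
      destruct (hl W i) as [g|e]; auto. subst; contradiction.
    + intros z [[W [[i g] Wz]] Vz]. apply (dV W i g z); auto.
Qed.

Lemma sep_point (K : TopSpace) (hK : top_compact K) (hH : top_hausdorff K)
  (B : K -> Prop) (hB : is_closed B) (x : K) (nb : ~ B x) :
  exists U V, is_open U /\ is_open V /\ (forall z, B z -> U z) /\ V x /\ disj U V.
Proof.
  apply (gen_sep K hK B hB (fun V => V x)); auto.
  intros y By. assert (x <> y) by (intro e; subst; contradiction).
  destruct (hH x y H) as [U [V [hU [hV [Ux [Vy d]]]]]].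
  exists V, U. repeat split; auto. intros z [a b]; apply (d z); auto.
Qed.

Lemma normal (K : TopSpace) (hK : top_compact K) (hH : top_hausdorff K)
  (A B : K -> Prop) (hA : is_closed A) (hB : is_closed B) (d : disj A B) :
  exists U V, is_open U /\ is_open V /\ (forall z, A z -> U z) /\ (forall z, B z -> V z) /\ disj U V.
Proof.
  apply (gen_sep K hK A hA (fun V => forall z, B z -> V z)); auto.
  intros y Ay. assert (nb : ~ B y) by (intro b; apply (d y); auto).
  destruct (sep_point K hK hH B hB y nb) as [U [V [hU [hV [BU [Vy dd]]]]]].
  exists V, U. repeat split; auto. intros z [a b]; apply (dd z); auto.
Qed.

Lemma shrink (K : TopSpace) (hK : top_compact K) (hH : top_hausdorff K)
  (C U : K -> Prop) (hC : is_closed C) (hU : is_open U) (s : forall z, C z -> U z) :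
  exists V D, is_open V /\ is_closed D /\ (forall z, C z -> V z) /\ (forall z, V z -> D z) /\ (forall z, D z -> U z).
Proof.
  destruct (normal K hK hH C (fun z => ~ U z) hC (closed_compl_open U hU)) as [V [W [hV [hW [CV [nUW d]]]]]].
  - intros z [a b]; apply b; auto.
  - exists V, (fun z => ~ W z). split; auto. split; [apply closed_compl_open; auto|].
    split; auto. split.
    + intros z Vz Wz; apply (d z); auto.
    + intros z nW. apply NNPP; intro nU; apply nW; auto.
Qed.

Definition interp {K : TopSpace} (C U : K -> Prop) : (K -> Prop) * (K -> Prop) :=
  epsilon (inhabits (C, C)) (fun p => is_closed C -> is_open U -> (forall z, C z -> U z) ->
    is_open (fst p) /\ is_closed (snd p) /\ (forall z, C z -> fst p z) /\
    (forall z, fst p z -> snd p z) /\ (forall z, snd p z -> U z)).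

Lemma interp_spec (K : TopSpace) (hK : top_compact K) (hH : top_hausdorff K)
  (C U : K -> Prop) (hC : is_closed C) (hU : is_open U) (s : forall z, C z -> U z) :
  is_open (fst (interp C U)) /\ is_closed (snd (interp C U)) /\ (forall z, C z -> fst (interp C U) z) /\
    (forall z, fst (interp C U) z -> snd (interp C U) z) /\ (forall z, snd (interp C U) z -> U z).
Proof.
  unfold interp. apply (epsilon_spec (inhabits (C, C)) (fun p => is_closed C -> is_open U -> (forall z, C z -> U z) ->
    is_open (fst p) /\ is_closed (snd p) /\ (forall z, C z -> fst p z) /\
    (forall z, fst p z -> snd p z) /\ (forall z, snd p z -> U z))); auto.
  destruct (shrink K hK hH C U hC hU s) as [V [D h]]. exists (V, D). intros; exact h.
Qed.

Fixpoint lvl {K : TopSpace} (F H : K -> Prop) (n : nat) (m : nat) : (K -> Prop) * (K -> Prop) :=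
  match n with
  | O => let P1 := interp F (fun z => ~ H z) in
         if Nat.eqb m 0 then interp F (fst P1) else P1
  | S n' => if Nat.even m then lvl F H n' (Nat.div2 m)
            else interp (snd (lvl F H n' (Nat.div2 m))) (fst (lvl F H n' (S (Nat.div2 m))))
  end.

Lemma lvl_S {K : TopSpace} (F H : K -> Prop) n m : lvl F H (S n) m =
  if Nat.even m then lvl F H n (Nat.div2 m)
  else interp (snd (lvl F H n (Nat.div2 m))) (fst (lvl F H n (S (Nat.div2 m)))).
Proof. reflexivity. Qed.

Lemma lvl_even {K : TopSpace} (F H : K -> Prop) n k : lvl F H (S n) (2 * k) = lvl F H n k.
Proof. rewrite lvl_S, Nat.div2_double, Nat.even_mul. reflexivity. Qed.

Lemma lvl_odd {K : TopSpace} (F H : K -> Prop) n k :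
  lvl F H (S n) (S (2 * k)) = interp (snd (lvl F H n k)) (fst (lvl F H n (S k))).
Proof.
  rewrite lvl_S. replace (Nat.even (S (2*k))) with false.
  - rewrite Nat.div2_succ_double. reflexivity.
  - rewrite Nat.even_succ, Nat.odd_mul. reflexivity.
Qed.

Definition Inv {K : TopSpace} (F H : K -> Prop) (n : nat) : Prop :=
  (forall k, (k <= 2 ^ n)%nat -> is_open (fst (lvl F H n k)) /\ is_closed (snd (lvl F H n k)) /\
      (forall z, fst (lvl F H n k) z -> snd (lvl F H n k) z)) /\
  (forall k, (k < 2 ^ n)%nat -> forall z, snd (lvl F H n k) z -> fst (lvl F H n (S k)) z) /\
  (forall z, F z -> fst (lvl F H n 0) z) /\
  (forall z, snd (lvl F H n (2 ^ n)) z -> ~ H z).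

Lemma inv_all (K : TopSpace) (hK : top_compact K) (hH : top_hausdorff K)
  (F H : K -> Prop) (hF : is_closed F) (hHc : is_closed H) (d : disj F H) :
  forall n, Inv F H n.
Proof.
  assert (s1 : forall z, F z -> ~ H z) by (intros z a b; apply (d z); auto).
  destruct (interp_spec K hK hH F (fun z => ~ H z) hF hHc s1) as [o1 [c1 [a1 [b1 e1]]]].
  set (P1 := interp F (fun z => ~ H z)) in *.
  destruct (interp_spec K hK hH F (fst P1) hF o1 a1) as [o0 [c0 [a0 [b0 e0]]]].
  induction n as [|n IH].
  - unfold Inv. simpl lvl. fold P1. split; [|split; [|split]].
    + intros k hk. destruct k as [|[|k]]; simpl; auto; simpl in hk; lia.
    + intros k hk. destruct k as [|k]; simpl; auto; simpl in hk; lia.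
    + simpl; auto.
    + simpl; auto.
  - destruct IH as [A [B [C D]]]. split; [|split; [|split]].
    + intros m hm. destruct (Nat.Even_or_Odd m) as [[k ->]|[k ->]].
      * rewrite lvl_even. apply A. rewrite Nat.pow_succ_r' in hm; lia.
      * replace (2 * k + 1)%nat with (S (2 * k)) by lia. rewrite lvl_odd.
        rewrite Nat.pow_succ_r' in hm.
        destruct (A k ltac:(lia)) as [ok [ck _]]. destruct (A (S k) ltac:(lia)) as [ok' _].
        destruct (interp_spec K hK hH _ _ ck ok' (B k ltac:(lia))) as [p [q [r [s t]]]]. auto.
    + intros m hm z. rewrite Nat.pow_succ_r' in hm. destruct (Nat.Even_or_Odd m) as [[k ->]|[k ->]].
      * rewrite lvl_even. replace (S (2 * k)) with (S (2*k)) by reflexivity. rewrite lvl_odd.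
        destruct (A k ltac:(lia)) as [ok [ck _]]. destruct (A (S k) ltac:(lia)) as [ok' _].
        destruct (interp_spec K hK hH _ _ ck ok' (B k ltac:(lia))) as [p [q [r [s t]]]]. auto.
      * replace (2 * k + 1)%nat with (S (2 * k)) by lia. rewrite lvl_odd.
        replace (S (S (2 * k))) with (2 * (S k))%nat by lia. rewrite lvl_even.
        destruct (A k ltac:(lia)) as [ok [ck _]]. destruct (A (S k) ltac:(lia)) as [ok' _].
        destruct (interp_spec K hK hH _ _ ck ok' (B k ltac:(lia))) as [p [q [r [s t]]]]. auto.
    + intros z Fz. replace 0%nat with (2 * 0)%nat by reflexivity. rewrite lvl_even. auto.
    + intros z. rewrite Nat.pow_succ_r'. rewrite lvl_even. auto.
Qed.

Lemma lvl_lift {K : TopSpace} (F H : K -> Prop) n k j :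
  lvl F H (j + n) (k * 2 ^ j) = lvl F H n k.
Proof.
  induction j as [|j IH].
  - simpl. rewrite Nat.mul_1_r. reflexivity.
  - simpl (S j + n)%nat. rewrite Nat.pow_succ_r'.
    replace (k * (2 * 2 ^ j))%nat with (2 * (k * 2 ^ j))%nat by ring.
    rewrite lvl_even. exact IH.
Qed.

Lemma chain (K : TopSpace) (hK : top_compact K) (hH : top_hausdorff K)
  (F H : K -> Prop) (hF : is_closed F) (hHc : is_closed H) (d : disj F H) N a b :
  (a < b)%nat -> (b <= 2 ^ N)%nat -> forall z, snd (lvl F H N a) z -> fst (lvl F H N b) z.
Proof.
  destruct (inv_all K hK hH F H hF hHc d N) as [A [B _]].
  induction b as [|b IH]; intros hab hb z h; [lia|].
  destruct (Nat.eq_dec a b) as [->|ne].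
  - apply B; auto; lia.
  - apply B; [lia|]. apply (A b ltac:(lia)). apply IH; auto; lia.
Qed.

Definition dy (k n : nat) : R := INR k / 2 ^ n.

Lemma pow2_pos n : 0 < 2 ^ n.
Proof. apply pow_lt; lra. Qed.

Lemma INR2 : INR 2 = 2.
Proof. simpl; lra. Qed.

Lemma INR_pow2 n : INR (2 ^ n) = 2 ^ n.
Proof. rewrite pow_INR, INR2; reflexivity. Qed.

Lemma dy_nonneg k n : 0 <= dy k n.
Proof. unfold dy. apply Rmult_le_pos; [apply pos_INR|]. left; apply Rinv_0_lt_compat, pow2_pos. Qed.

Lemma dy_le1 k n : (k <= 2 ^ n)%nat -> dy k n <= 1.
Proof.
  intro h. unfold dy. apply le_INR in h. rewrite INR_pow2 in h.
  pose proof (pow2_pos n). apply (Rmult_le_reg_r (2 ^ n)); auto. field_simplify; lra.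
Qed.

Lemma dy_lt a n b m : dy a n < dy b m -> (a * 2 ^ m < b * 2 ^ n)%nat.
Proof.
  intro h. unfold dy in h. pose proof (pow2_pos n). pose proof (pow2_pos m).
  apply INR_lt. rewrite !mult_INR, !INR_pow2.
  replace (INR a * 2 ^ m) with (INR a / 2 ^ n * (2 ^ n * 2 ^ m)) by (field; lra).
  replace (INR b * 2 ^ n) with (INR b / 2 ^ m * (2 ^ n * 2 ^ m)) by (field; lra).
  apply Rmult_lt_compat_r; auto. apply Rmult_lt_0_compat; auto.
Qed.

Lemma dy_lt1 k n : dy k n < 1 -> (k < 2 ^ n)%nat.
Proof.
  intro h. unfold dy in h. pose proof (pow2_pos n). apply INR_lt. rewrite INR_pow2.
  replace (INR k) with (INR k / 2 ^ n * 2 ^ n) by (field; lra). 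
  apply Rlt_le_trans with (1 * 2 ^ n); [apply Rmult_lt_compat_r; auto | lra].
Qed.

Lemma nat_unbounded x : exists N : nat, x < INR N.
Proof.
  destruct (archimed x) as [h1 h2]. exists (Z.to_nat (up x)).
  destruct (Z.le_gt_cases 0 (up x)) as [p|p].
  - rewrite INR_IZR_INZ, Z2Nat.id; auto.
  - apply IZR_lt in p. pose proof (pos_INR (Z.to_nat (up x))). lra.
Qed.

Lemma INR_lt_pow2 n : INR n < 2 ^ n.
Proof.
  induction n as [|n IH]; [simpl; lra|].
  rewrite S_INR. assert (1 <= 2 ^ n) by (apply pow_R1_Rle; lra). simpl. lra.
Qed.

Lemma density a b : 0 <= a -> a < b -> b <= 1 -> exists n k, (k <= 2 ^ n)%nat /\ a < dy k n < b.
Proof.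
  intros h0 hab hb1.
  destruct (nat_unbounded (/ (b - a))) as [n hn].
  pose proof (INR_lt_pow2 n) as hp. pose proof (pow2_pos n) as p2.
  assert (e : / 2 ^ n < b - a).
  { assert (0 < /(b-a)) by (apply Rinv_0_lt_compat; lra).
    replace (b - a) with (/ / (b - a)) by (field; lra).
    apply Rinv_lt_contravar; [apply Rmult_lt_0_compat; lra| lra]. }
  destruct (archimed (a * 2 ^ n)) as [u1 u2].
  assert (zp : (0 <= up (a * 2 ^ n))%Z).
  { apply le_IZR. assert (0 <= a * 2 ^ n) by (apply Rmult_le_pos; lra). lra. }
  set (k := Z.to_nat (up (a * 2 ^ n))).
  assert (ek : INR k = IZR (up (a * 2 ^ n))) by (unfold k; rewrite INR_IZR_INZ, Z2Nat.id; auto).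
  assert (h1 : a < dy k n).
  { unfold dy. rewrite ek. apply (Rmult_lt_reg_r (2 ^ n)); auto. field_simplify; lra. }
  assert (h2 : dy k n < b).
  { unfold dy. rewrite ek. apply (Rmult_lt_reg_r (2 ^ n)); auto. field_simplify; [|lra].
    assert (1 < (b - a) * 2 ^ n).
    { apply (Rmult_lt_reg_r (/ 2 ^ n)); [apply Rinv_0_lt_compat; auto|].
      field_simplify; lra. }
    lra. }
  exists n, k. split; [|lra]. apply Nat.lt_le_incl, dy_lt1; lra.
Qed.

Lemma core (K : TopSpace) (hK : top_compact K) (hH : top_hausdorff K)
  (F H : K -> Prop) (hF : is_closed F) (hHc : is_closed H) (d : disj F H) n1 k1 n2 k2 :
  (k1 <= 2 ^ n1)%nat -> (k2 <= 2 ^ n2)%nat -> dy k1 n1 < dy k2 n2 ->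
  forall z, snd (lvl F H n1 k1) z -> fst (lvl F H n2 k2) z.
Proof.
  intros h1 h2 hl z hz. apply dy_lt in hl.
  rewrite <- (lvl_lift F H n1 k1 n2) in hz. rewrite <- (lvl_lift F H n2 k2 n1).
  rewrite Nat.add_comm in hz.
  apply (chain K hK hH F H hF hHc d (n1 + n2) (k1 * 2 ^ n2) (k2 * 2 ^ n1)); auto.
  rewrite Nat.pow_add_r. apply Nat.mul_le_mono_r with (p := (2 ^ n1)%nat) in h2. lia.
Qed.

Definition Od {K : TopSpace} (F H : K -> Prop) (r : R) (z : K) : Prop :=
  exists n k, (k <= 2 ^ n)%nat /\ r = dy k n /\ fst (lvl F H n k) z.

Definition Tset {K : TopSpace} (F H : K -> Prop) (z : K) (r : R) : Prop := Od F H r z \/ r = 1.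

Definition Eset {K : TopSpace} (F H : K -> Prop) (z : K) (r : R) : Prop := Tset F H z (- r).

Lemma Eset_bound {K : TopSpace} (F H : K -> Prop) z : bound (Eset F H z).
Proof.
  exists 0. intros r hr. destruct hr as [[n [k [hk [e oo]]]]|e].
  - pose proof (dy_nonneg k n). lra.
  - lra.
Qed.

Lemma Eset_ne {K : TopSpace} (F H : K -> Prop) z : exists x, Eset F H z x.
Proof. exists (-1). right. lra. Qed.

Definition urys {K : TopSpace} (F H : K -> Prop) (z : K) : R :=
  - proj1_sig (completeness (Eset F H z) (Eset_bound F H z) (Eset_ne F H z)).

Lemma urys_lb {K : TopSpace} (F H : K -> Prop) z t : Tset F H z t -> urys F H z <= t.
Proof.
  intro h. unfold urys. destruct (completeness _ _ _) as [m hm]. simpl. destruct hm as [ub lub].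
  assert (Eset F H z (- t)) by (unfold Eset; rewrite Ropp_involutive; auto).
  specialize (ub _ H0). lra.
Qed.

Lemma urys_glb {K : TopSpace} (F H : K -> Prop) z c :
  (forall t, Tset F H z t -> c <= t) -> c <= urys F H z.
Proof.
  intro h. unfold urys. destruct (completeness _ _ _) as [m hm]. simpl. destruct hm as [ub lub].
  assert (m <= - c); [|lra]. apply lub. intros r hr. specialize (h _ hr). lra.
Qed.

Lemma urys_le1 {K : TopSpace} (F H : K -> Prop) z : urys F H z <= 1.
Proof. apply urys_lb. right; auto. Qed.

Lemma urys_ge0 {K : TopSpace} (F H : K -> Prop) z : 0 <= urys F H z.
Proof.
  apply urys_glb. intros t [[n [k [_ [e _]]]]|e]; subst; [apply dy_nonneg|lra].
Qed.

Lemma urys_F (K : TopSpace) (hK : top_compact K) (hH : top_hausdorff K)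
  (F H : K -> Prop) (hF : is_closed F) (hHc : is_closed H) (d : disj F H) z :
  F z -> urys F H z = 0.
Proof.
  intro fz. destruct (inv_all K hK hH F H hF hHc d 0) as [_ [_ [C _]]].
  assert (urys F H z <= 0); [|pose proof (urys_ge0 F H z); lra].
  apply urys_lb. left. exists 0%nat, 0%nat. split; [simpl; lia|]. split; [unfold dy; simpl; field|auto].
Qed.

Lemma urys_H (K : TopSpace) (hK : top_compact K) (hH : top_hausdorff K)
  (F H : K -> Prop) (hF : is_closed F) (hHc : is_closed H) (d : disj F H) z :
  H z -> urys F H z = 1.
Proof.
  intro hz. assert (1 <= urys F H z); [|pose proof (urys_le1 F H z); lra].
  apply urys_glb. intros t [[n [k [hk [e o]]]]|e]; [|lra]. exfalso.
  destruct (inv_all K hK hH F H hF hHc d n) as [A [_ [_ D]]].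
  apply (D z); auto. destruct (A (2 ^ n)%nat ltac:(lia)) as [_ [_ oc]]. apply oc.
  destruct (Nat.eq_dec k (2 ^ n)) as [<-|ne]; auto.
  apply (chain K hK hH F H hF hHc d n k); auto; [lia|]. apply (A k hk); auto.
Qed.

Lemma urys_lt_open (K : TopSpace) (hK : top_compact K) (hH : top_hausdorff K)
  (F H : K -> Prop) (hF : is_closed F) (hHc : is_closed H) (d : disj F H) a :
  is_open (fun z => urys F H z < a).
Proof.
  destruct (Rlt_or_le 1 a) as [h|h].
  - eapply open_ext; [|apply open_full]. intro z; split; auto. intros _. pose proof (urys_le1 F H z); lra.
  - eapply open_ext; [|apply (open_union K (fun W => exists n k, (k <= 2 ^ n)%nat /\ dy k n < a /\ W = fst (lvl F H n k)))].
    + intro z. split.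
      * intros [W [[n [k [hk [ha ->]]]] wz]]. apply Rle_lt_trans with (dy k n); auto.
        apply urys_lb. left. exists n, k; auto.
      * intro hz. apply NNPP. intro nx.
        assert (a <= urys F H z); [|lra]. apply urys_glb. intros t ht.
        destruct (Rlt_or_le t a) as [lt|]; auto. exfalso.
        destruct ht as [[n [k [hk [e o]]]]|e]; [|lra].
        apply nx. exists (fst (lvl F H n k)). split; auto. exists n, k. subst; auto.
    + intros U [n [k [hk [_ ->]]]]. destruct (inv_all K hK hH F H hF hHc d n) as [A _].
      apply (A k hk).
Qed.

Lemma urys_gt_open (K : TopSpace) (hK : top_compact K) (hH : top_hausdorff K)
  (F H : K -> Prop) (hF : is_closed F) (hHc : is_closed H) (d : disj F H) a :
  is_open (fun z => a < urys F H z).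
Proof.
  destruct (Rlt_or_le a 0) as [h|h].
  - eapply open_ext; [|apply open_full]. intro z; split; auto. intros _. pose proof (urys_ge0 F H z); lra.
  - eapply open_ext; [|apply (open_union K (fun W => exists n k, (k <= 2 ^ n)%nat /\ a < dy k n /\ W = (fun z => ~ snd (lvl F H n k) z)))].
    + intro z. split.
      * intros [W [[n [k [hk [ha ->]]]] wz]]. apply Rlt_le_trans with (dy k n); auto.
        apply urys_glb. intros t [[n1 [k1 [hk1 [e o]]]]|e]; [|subst; apply dy_le1; auto].
        subst t. destruct (Rlt_or_le (dy k1 n1) (dy k n)) as [lt|]; auto. exfalso.
        apply wz. destruct (inv_all K hK hH F H hF hHc d n) as [A _]. apply (A k hk).
        apply (core K hK hH F H hF hHc d n1 k1 n k); auto.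
        destruct (inv_all K hK hH F H hF hHc d n1) as [A1 _]. apply (A1 k1 hk1); auto.
      * intro hz. pose proof (urys_le1 F H z).
        destruct (density a (urys F H z)) as [n [k [hk [l1 l2]]]]; auto.
        destruct (density (dy k n) (urys F H z)) as [n' [k' [hk' [l1' l2']]]]; auto; [apply dy_nonneg|].
        exists (fun z => ~ snd (lvl F H n k) z). split; [exists n, k; auto|].
        intro c. assert (urys F H z <= dy k' n'); [|lra].
        apply urys_lb. left. exists n', k'. split; auto. split; auto.
        apply (core K hK hH F H hF hHc d n k n' k'); auto.
    + intros U [n [k [hk [_ ->]]]]. destruct (inv_all K hK hH F H hF hHc d n) as [A _].
      apply (A k hk).
Qed.

Lemma urys_ball_open (K : TopSpace) (hK : top_compact K) (hH : top_hausdorff K)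
  (F H : K -> Prop) (hF : is_closed F) (hHc : is_closed H) (d : disj F H) c r :
  is_open (fun z => Rabs (urys F H z - c) < r).
Proof.
  eapply open_ext; [|apply open_inter; [apply (urys_gt_open K hK hH F H hF hHc d (c - r))|apply (urys_lt_open K hK hH F H hF hHc d (c + r))]].
  intro z. split.
  - intros [a b]. apply Rabs_def1; lra.
  - intro h. apply Rabs_def2 in h. lra.
Qed.

Lemma ball_list (K : TopSpace) (Gamma : Type) (e : K -> Gamma -> R)
  (hb : forall g c r, is_open (fun z => Rabs (e z g - c) < r)) :
  forall gs (c : Gamma -> R) r, is_open (fun z => forall g, In g gs -> Rabs (e z g - c g) < r).
Proof.
  induction gs as [|g gs IH]; intros c r.
  - eapply open_ext; [|apply open_full]. intro z; split; auto. intros _ g [].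
  - eapply open_ext; [|apply open_inter; [apply (hb g (c g) r)|apply (IH c r)]].
    intro z; split.
    + intros [a b] g' [<-|i]; auto.
    + intro h; split; [apply h; left; auto|]. intros g0 i; apply h; right; auto.
Qed.

Lemma cont_e (K : TopSpace) (Gamma : Type) (e : K -> Gamma -> R)
  (hb : forall g c r, is_open (fun z => Rabs (e z g - c) < r)) :
  forall V, prod_open Gamma V -> is_open (fun k => V (e k)).
Proof.
  intros V hV.
  eapply open_ext; [|apply (open_union K (fun W => exists k gs eps, V (e k) /\ 0 < eps /\
      (forall y, (forall g, In g gs -> Rabs (y g - e k g) < eps) -> V y) /\
      W = (fun z => forall g, In g gs -> Rabs (e z g - e k g) < eps)))].
  - intro z. split.
    + intros [W [[k [gs [eps [_ [_ [h ->]]]]]] wz]]. apply h. auto.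
    + intro vz. destruct (hV _ vz) as [gs [eps [he h]]].
      exists (fun z' => forall g, In g gs -> Rabs (e z' g - e z g) < eps). split.
      * exists z, gs, eps. auto.
      * intros g _. replace (e z g - e z g) with 0 by ring. rewrite Rabs_R0; auto.
  - intros U [k [gs [eps [_ [_ [_ ->]]]]]]. apply ball_list; auto.
Qed.

Definition fkind {K : TopSpace} {Gamma : Type} (e : K -> Gamma -> R) (y : Gamma -> R) (W : K -> Prop) :=
  is_open W /\ exists k g dd, 0 < dd /\ dd <= Rabs (y g - e k g) /\
    forall z, W z -> Rabs (e z g - e k g) < dd / 2.

Lemma fk_list {K : TopSpace} {Gamma : Type} (e : K -> Gamma -> R) (y : Gamma -> R) :
  forall l : list (K -> Prop), exists gs eps, 0 < eps /\ forall W, In W l -> fkind e y W ->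
    exists k g dd, In g gs /\ eps <= dd / 2 /\ 0 < dd /\ dd <= Rabs (y g - e k g) /\
      forall z, W z -> Rabs (e z g - e k g) < dd / 2.
Proof.
  induction l as [|W l IH].
  - exists nil, 1. split; [lra|]. intros W [].
  - destruct IH as [gs [eps [he h]]].
    destruct (classic (fkind e y W)) as [f|nf].
    + destruct f as [_ [k [g [dd [p [q r]]]]]].
      exists (g :: gs), (Rmin eps (dd / 2)). split; [apply Rmin_glb_lt; lra|].
      intros W' [<-|i] f'.
      * exists k, g, dd. split; [left; auto|]. split; [apply Rmin_r|]. auto.
      * destruct (h W' i f') as [k' [g' [dd' [a [b c]]]]]. exists k', g', dd'.
        split; [right; auto|]. split; auto. pose proof (Rmin_l eps (dd / 2)). lra.
    + exists gs, eps. split; auto. intros W' [<-|i] f'; [contradiction|auto].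
Qed.

Lemma open_map (K : TopSpace) (hK : top_compact K) (Gamma : Type) (e : K -> Gamma -> R)
  (inj : forall a b, e a = e b -> a = b)
  (hb : forall g c r, is_open (fun z => Rabs (e z g - c) < r)) :
  forall U : K -> Prop, is_open U -> exists V, prod_open Gamma V /\ forall k, U k <-> V (e k).
Proof.
  intros U hU. exists (fun y => forall k, ~ U k -> y <> e k). split.
  - intros y Vy.
    destruct (hK (fun W => fkind e y W \/ W = U)) as [l [hl cov]].
    + intros W [[o _]|eW]; [auto|subst W; auto].
    + intro z. destruct (classic (U z)) as [u|nu]; [exists U; auto|].
      assert (ex : exists g, y g <> e z g).
      { apply NNPP; intro n. apply (Vy z nu). apply functional_extensionality. intro g.
        apply NNPP; intro m; apply n; exists g; auto. }
      destruct ex as [g ne].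
      assert (pd : 0 < Rabs (y g - e z g)) by (apply Rabs_pos_lt; intro h; apply ne; lra).
      exists (fun z' => Rabs (e z' g - e z g) < Rabs (y g - e z g) / 2). split.
      * left. split; [apply hb|]. exists z, g, (Rabs (y g - e z g)). split; auto. split; [lra|auto].
      * replace (e z g - e z g) with 0 by ring. rewrite Rabs_R0. lra.
    + destruct (fk_list e y l) as [gs [eps [he h]]]. exists gs, eps. split; auto.
      intros y' hy' k nU ek. destruct (cov k) as [W [i wk]].
      destruct (hl W i) as [f|eW]; [|subst W; contradiction].
      destruct (h W i f) as [k0 [g [dd [ig [le [pdd [ld b]]]]]]].
      specialize (b k wk). specialize (hy' g ig). subst y'.
      apply Rabs_def2 in b. apply Rabs_def2 in hy'.
      assert (Rabs (y g - e k0 g) < dd) by (apply Rabs_def1; lra). lra.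
  - intro k. split.
    + intros u k' nu ek. apply inj in ek. subst; contradiction.
    + intro v. apply NNPP; intro nu. apply (v k nu); auto.
Qed.

Lemma to_nat_inj p q : Cantor.to_nat p = Cantor.to_nat q -> p = q.
Proof. intro h. rewrite <- (Cantor.cancel_of_to p), <- (Cantor.cancel_of_to q), h. reflexivity. Qed.

Lemma coord_gt_open (K : TopSpace) (Gamma : Type) (e : K -> Gamma -> R)
  (cont : forall V, prod_open Gamma V -> is_open (fun k => V (e k))) g q :
  is_open (fun z => q < e z g).
Proof.
  apply (cont (fun y => q < y g)). intros y hy. exists (g :: nil), (y g - q). split; [lra|].
  intros y' h. specialize (h g (or_introl eq_refl)). apply Rabs_def2 in h. lra.
Qed.

Lemma coord_lt_open (K : TopSpace) (Gamma : Type) (e : K -> Gamma -> R)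
  (cont : forall V, prod_open Gamma V -> is_open (fun k => V (e k))) g q :
  is_open (fun z => e z g < q).
Proof.
  apply (cont (fun y => y g < q)). intros y hy. exists (g :: nil), (q - y g). split; [lra|].
  intros y' h. specialize (h g (or_introl eq_refl)). apply Rabs_def2 in h. lra.
Qed.

Definition cnd (i : ((nat * nat) * (nat * nat))) : Prop :=
  0 < dy (fst (fst i)) (snd (fst i)) /\ dy (fst (fst i)) (snd (fst i)) < dy (fst (snd i)) (snd (snd i)) /\
  dy (fst (snd i)) (snd (snd i)) < 1.

Theorem lemma3 (K : TopSpace) (hK : top_compact K) (hH : top_hausdorff K) :
  almost_totally_disconnected K <->
  exists (I : Type) (F H : I -> K -> Prop),
    (forall i, is_closed (F i) /\ is_closed (H i)) /\
    (forall i x, ~ (F i x /\ H i x)) /\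
    (forall x : K, countable_set (fun i => ~ (F i x \/ H i x))) /\
    (forall x y : K, x <> y ->
       exists i, (F i x /\ H i y) \/ (F i y /\ H i x)).
Proof.
  split.
  - intros [Gamma [e [hs [inj [cont _]]]]].
    exists (Gamma * ((nat * nat) * (nat * nat)))%type.
    exists (fun i z => cnd (snd i) -> e z (fst i) <= dy (fst (fst (snd i))) (snd (fst (snd i)))).
    exists (fun i z => cnd (snd i) /\ dy (fst (snd (snd i))) (snd (snd (snd i))) <= e z (fst i)).
    split; [|split; [|split]].
    + intros [g [[a b] [c d]]]. simpl. split.
      * destruct (classic (cnd ((a, b), (c, d)))) as [h|h].
        -- unfold is_closed. eapply open_ext; [|apply (coord_gt_open K Gamma e cont g (dy a b))].
           intro z. simpl. split; [intros l1 l2; specialize (l2 h); lra|].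
           intro n. apply Rnot_le_lt. intro l; apply n; auto.
        -- unfold is_closed. eapply open_ext; [|apply open_empty]. intro z. simpl. split; [tauto|].
           intro n; apply n; intro; contradiction.
      * destruct (classic (cnd ((a, b), (c, d)))) as [h|h].
        -- unfold is_closed. eapply open_ext; [|apply (coord_lt_open K Gamma e cont g (dy c d))].
           intro z. simpl. split; [intros l1 [_ l2]; lra|].
           intro n. apply Rnot_le_lt. intro l; apply n; auto.
        -- unfold is_closed. eapply open_ext; [|apply open_full]. intro z. simpl. tauto.
    + intros [g [[a b] [c d]]] x [f [h l]]. specialize (f h). unfold cnd in h. simpl in *. lra.
    + intro x. destruct (hs x) as [_ [fg hfg]].
      exists (fun i => Cantor.to_nat (fg (fst i), Cantor.to_nat (Cantor.to_nat (fst (fst (snd i)), snd (fst (snd i))),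
                                                             Cantor.to_nat (fst (snd (snd i)), snd (snd (snd i)))))).
      assert (key : forall i, ~ ((cnd (snd i) -> e x (fst i) <= dy (fst (fst (snd i))) (snd (fst (snd i)))) \/
                   cnd (snd i) /\ dy (fst (snd (snd i))) (snd (snd (snd i))) <= e x (fst i)) ->
                   e x (fst i) <> 0 /\ e x (fst i) <> 1).
      { intros [g [[a b] [c d]]] n. simpl in *.
        destruct (classic (cnd ((a, b), (c, d)))) as [h|h]; [|exfalso; apply n; left; intro; contradiction].
        unfold cnd in h; simpl in h.
        assert (dy a b < e x g) by (apply Rnot_le_lt; intro; apply n; left; auto).
        assert (e x g < dy c d) by (apply Rnot_le_lt; intro; apply n; right; auto).
        split; lra. }
      intros [g1 [[a1 b1] [c1 d1]]] [g2 [[a2 b2] [c2 d2]]] h1 h2 eq.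
      apply key in h1. apply key in h2. simpl in h1, h2.
      apply to_nat_inj in eq. pose proof (f_equal fst eq) as e1. pose proof (f_equal snd eq) as e2.
      cbn [fst snd] in e1, e2. clear eq.
      apply to_nat_inj in e2. pose proof (f_equal fst e2) as e3. pose proof (f_equal snd e2) as e4.
      cbn [fst snd] in e3, e4. clear e2.
      apply to_nat_inj in e3. apply to_nat_inj in e4.
      injection e3 as -> ->. injection e4 as -> ->.
      rewrite (hfg g1 g2 h1 h2 e1). reflexivity.
    + intros x y nxy.
      assert (ex : exists g, e x g <> e y g).
      { apply NNPP; intro n. apply nxy, inj, functional_extensionality. intro g.
        apply NNPP; intro m; apply n; exists g; auto. }
      destruct ex as [g ne].
      destruct (hs x) as [bx _]. destruct (hs y) as [by' _].
      specialize (bx g). specialize (by' g).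
      destruct (Rlt_or_le (e x g) (e y g)) as [lt|ge].
      * destruct (density (e x g) (e y g)) as [b [a [_ [l1 l2]]]]; try lra.
        destruct (density (dy a b) (e y g)) as [d [c [_ [l3 l4]]]]; try lra.
        exists (g, ((a, b), (c, d))). left. simpl. split; [intros; lra|].
        split; [|lra]. unfold cnd; simpl. split; lra.
      * destruct (density (e y g) (e x g)) as [b [a [_ [l1 l2]]]]; try lra.
        destruct (density (dy a b) (e x g)) as [d [c [_ [l3 l4]]]]; try lra.
        exists (g, ((a, b), (c, d))). right. simpl. split; [intros; lra|].
        split; [|lra]. unfold cnd; simpl. split; lra.
  - intros [I [F [H [hc [hd [hcount hsep]]]]]].
    assert (dj : forall i, disj (F i) (H i)) by (intros i z; apply hd).
    set (e := fun z (i : I) => urys (F i) (H i) z).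
    assert (hb : forall g c r, is_open (fun z => Rabs (e z g - c) < r)).
    { intros g c r. unfold e. destruct (hc g) as [a b]. apply (urys_ball_open K hK hH (F g) (H g) a b (dj g)). }
    assert (inj : forall a b, e a = e b -> a = b).
    { intros a b h. apply NNPP; intro n. destruct (hsep a b n) as [i [[p q]|[p q]]];
      destruct (hc i) as [c1 c2];
      pose proof (urys_F K hK hH (F i) (H i) c1 c2 (dj i) _ p);
      pose proof (urys_H K hK hH (F i) (H i) c1 c2 (dj i) _ q);
      assert (e a i = e b i) by (rewrite h; auto); unfold e in *; lra. }
    exists I, e. split; [|split; [exact inj|split]].
    + intro k. split.
      * intro g. unfold e. split; [apply urys_ge0|apply urys_le1].
      * destruct (hcount k) as [f hf]. exists f. intros a b [a1 a2] [b1 b2] eq.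
        apply hf; auto.
        -- intros [p|p]; destruct (hc a) as [c1 c2];
           [apply a1, (urys_F K hK hH (F a) (H a) c1 c2 (dj a)); auto
           |apply a2, (urys_H K hK hH (F a) (H a) c1 c2 (dj a)); auto].
        -- intros [p|p]; destruct (hc b) as [c1 c2];
           [apply b1, (urys_F K hK hH (F b) (H b) c1 c2 (dj b)); auto
           |apply b2, (urys_H K hK hH (F b) (H b) c1 c2 (dj b)); auto].
    + apply cont_e; auto.
    + apply open_map; auto.
Qed.
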